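(* Let $A\in \mathbb{R}^{m\times n}$ be such that $e=(1,1,\dots,1)^{t}\in \mathcal{R}(A)$ and $A^{\dagger}\geq 0$. Let $A=P_{1}-R_{1}+S_{1}$ be a weak regular proper double splitting of $A$, and let $A=P_{2}-R_{2}+S_{2}$ be a regular proper double splitting of $A$ such that $P_{2}^{\dagger}$ has no zero row and $P_{2}P_{2}^{\dagger}\geq 0$. Define $$W_{1}=\begin{pmatrix} P_{1}^{\dagger}R_{1} & -P_{1}^{\dagger}S_{1}\\ I & 0\end{pmatrix},\qquad W_{2}=\begin{pmatrix} P_{2}^{\dagger}R_{2} & -P_{2}^{\dagger}S_{2}\\ I & 0\end{pmatrix}\in\mathbb{R}^{2n\times 2n},$$ where $I$ is the $n\times n$ identity matrix. If $P_{1}^{\dagger}\geq P_{2}^{\dagger}$ and at least one of the conditions (i) $P_{1}^{\dagger}R_{1}\geq P_{2}^{\dagger}R_{2}$, (ii) $P_{1}^{\dagger}S_{1}\geq P_{2}^{\dagger}S_{2}$ holds, then $\rho(W_{1})\leq \rho(W_{2})< 1$.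
   Context: $A^{\dagger}$ denotes the Moore–Penrose inverse of $A$ and $\mathcal{R}(A)$ its range. For real matrices, $B\geq 0$ means all entries of $B$ are nonnegative, and $B\geq C$ means $B-C\geq 0$. $\rho(\cdot)$ denotes the spectral radius. For $A\in\mathbb{R}^{m\times n}$, a decomposition $A=P-R+S$ with $P,R,S\in\mathbb{R}^{m\times n}$ is a proper double splitting if $\mathcal{R}(A)=\mathcal{R}(P)$ and $\mathcal{N}(A)=\mathcal{N}(P)$. A proper double splitting is called regular if $P^{\dagger}\geq 0$, $R\geq 0$ and $-S\geq 0$; it is called weak regular if $P^{\dagger}\geq 0$, $P^{\dagger}R\geq 0$ and $-P^{\dagger}S\geq 0$. *)

(* Defs.v *)
From HB Require Import structures.
From mathcomp Require Import all_boot all_order all_algebra.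
From mathcomp Require Import boolp classical_sets reals.
From mathcomp Require Import complex.
Set Implicit Arguments. Unset Strict Implicit. Unset Printing Implicit Defensive.
Import Order.TTheory GRing.Theory Num.Theory.
Local Open Scope ring_scope.

Section Defs.
Variable R : realType.

Definition is_pinv m n (A : 'M[R]_(m, n)) (X : 'M[R]_(n, m)) : Prop :=
  [/\ A *m X *m A = A, X *m A *m X = X,
      (A *m X)^T = A *m X & (X *m A)^T = X *m A].

(* A^dagger: the (unique, always existing) Moore-Penrose inverse *)
Definition pinv m n (A : 'M[R]_(m, n)) : 'M[R]_(n, m) :=
  xget 0 (fun X => is_pinv A X).

Definition in_range m n (A : 'M[R]_(m, n)) (y : 'cV[R]_m) : Prop :=
  exists x : 'cV[R]_n, y = A *m x.

Definition in_null m n (A : 'M[R]_(m, n)) (x : 'cV[R]_n) : Prop :=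
  A *m x = 0.

Definition mx_nonneg m n (B : 'M[R]_(m, n)) : Prop := forall i j, 0 <= B i j.
Definition mx_ge m n (B C : 'M[R]_(m, n)) : Prop := mx_nonneg (B - C).

Definition proper_double_splitting m n (A P Rm S : 'M[R]_(m, n)) : Prop :=
  [/\ A = P - Rm + S,
      (forall y, in_range A y <-> in_range P y) &
      (forall x, in_null A x <-> in_null P x)].

Definition regular_pds m n (A P Rm S : 'M[R]_(m, n)) : Prop :=
  [/\ proper_double_splitting A P Rm S,
      mx_nonneg (pinv P), mx_nonneg Rm & mx_nonneg (- S)].

Definition weak_regular_pds m n (A P Rm S : 'M[R]_(m, n)) : Prop :=
  [/\ proper_double_splitting A P Rm S,
      mx_nonneg (pinv P), mx_nonneg (pinv P *m Rm) & mx_nonneg (- (pinv P *m S))].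

Definition spectral_radius k (W : 'M[R]_k) : R :=
  sup [set Normc.normc z | z in [set z : R[i] | eigenvalue (map_mx (real_complex R) W) z]].

Definition iter_mx m n (P Rm S : 'M[R]_(m, n)) : 'M[R]_(n + n) :=
  block_mx (pinv P *m Rm) (- (pinv P *m S)) 1%:M 0.

Definition no_zero_row m n (B : 'M[R]_(m, n)) : Prop :=
  forall i, exists j, B i j != 0.
End Defs.

(* Main.v *)
Require Import Defs.
From HB Require Import structures.
From mathcomp Require Import all_boot all_order all_algebra.
From mathcomp Require Import boolp classical_sets reals complex.
From mathcomp.algebra_tactics Require Import ring lra.
Import Order.TTheory GRing.Theory Num.Theory.
Local Open Scope ring_scope.
Set Implicit Arguments. Unset Strict Implicit. Unset Printing Implicit Defensive.


Section MP.
Variable R : realType.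

Lemma rv_sq_eq0 k (y : 'rV[R]_k) : y *m y^T = 0 -> y = 0.
Proof.
move=> /matrixP /(_ 0 0); rewrite !mxE => H.
have: forall i, i \in predT -> y 0 i * y^T i 0 = 0.
  apply/psumr_eq0P => //= i _; rewrite mxE; exact: mulr_ge0_le0 _ _ || (rewrite -expr2; exact: sqr_ge0).
move=> Hi; apply/rowP => i; rewrite mxE; move: (Hi i isT); rewrite mxE.
by move/eqP; rewrite mulf_eq0 orbb => /eqP.
Qed.

Lemma gram_unit k l (G : 'M[R]_(k, l)) : row_free G -> G *m G^T \in unitmx.
Proof.
move=> fG; rewrite -row_free_unit; apply: inj_row_free => v.
rewrite mulmxA => H.
have : (v *m G) *m (v *m G)^T = 0 by rewrite trmx_mul mulmxA H mul0mx.
move/rv_sq_eq0 => /eqP; rewrite mulmx_free_eq0 //; by move/eqP.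
Qed.

Lemma pinv_exists m n (M : 'M[R]_(m, n)) : exists X, is_pinv M X.
Proof.
have [r [F [G [hM fG fF]]]] : exists r (F : 'M[R]_(m, r)) (G : 'M[R]_(r, n)),
    [/\ F *m G = M, row_free G & row_free F^T].
  exists (\rank M), (col_base M), (row_base M); split.
  - exact: mulmx_base.
  - exact: row_base_free.
  - by rewrite /row_free mxrank_tr; exact: col_base_full.
subst M.
have uG := gram_unit fG.
have uF : F^T *m F \in unitmx by have := gram_unit fF; rewrite trmxK.
set iG := invmx (G *m G^T); set iF := invmx (F^T *m F).
have sG : iG^T = iG by rewrite /iG trmx_inv trmx_mul trmxK.
have sF : iF^T = iF by rewrite /iF trmx_inv trmx_mul trmxK.
have kG : G *m G^T *m iG = 1%:M by rewrite /iG mulmxV.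
have kF : iF *m (F^T *m F) = 1%:M by rewrite /iF mulVmx.
have kG' p (X : 'M[R]_(r, p)) : G *m (G^T *m (iG *m X)) = X by rewrite !mulmxA kG mul1mx.
have kF' p (X : 'M[R]_(r, p)) : iF *m (F^T *m (F *m X)) = X.
  by rewrite 2!mulmxA kF mul1mx.
exists (G^T *m iG *m iF *m F^T).
have MX : (F *m G) *m (G^T *m iG *m iF *m F^T) = F *m iF *m F^T.
  by rewrite -!mulmxA kG'.
have XM : (G^T *m iG *m iF *m F^T) *m (F *m G) = G^T *m iG *m G.
  by rewrite -!mulmxA kF'.
split.
- by rewrite MX -!mulmxA kF'.
- by rewrite XM -!mulmxA kG'.
- by rewrite MX !trmx_mul trmxK sF mulmxA.
- by rewrite XM !trmx_mul trmxK sG mulmxA.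
Qed.

Lemma pinvP m n (M : 'M[R]_(m, n)) : is_pinv M (pinv M).
Proof. rewrite /pinv; apply: xgetPex; exact: pinv_exists. Qed.

End MP.


Section NN.
Variable R : realType.

Lemma nn_mul m n p (A : 'M[R]_(m, n)) (B : 'M[R]_(n, p)) :
  mx_nonneg A -> mx_nonneg B -> mx_nonneg (A *m B).
Proof. by move=> hA hB i j; rewrite mxE; apply: sumr_ge0 => k _; apply: mulr_ge0. Qed.

Lemma nn_add m n (A B : 'M[R]_(m, n)) :
  mx_nonneg A -> mx_nonneg B -> mx_nonneg (A + B).
Proof. by move=> hA hB i j; rewrite mxE; apply: addr_ge0. Qed.

Lemma nn_scale m n (a : R) (A : 'M[R]_(m, n)) :
  0 <= a -> mx_nonneg A -> mx_nonneg (a *: A).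
Proof. by move=> ha hA i j; rewrite mxE; apply: mulr_ge0. Qed.

Lemma nn_const m n : mx_nonneg (const_mx 1 : 'M[R]_(m, n)).
Proof. by move=> i j; rewrite mxE. Qed.

Lemma nn_id n : mx_nonneg (1%:M : 'M[R]_n).
Proof. by move=> i j; rewrite mxE; case: (i == j). Qed.

Lemma sum_pos (I : finType) (f : I -> R) i0 :
  (forall i, 0 <= f i) -> 0 < f i0 -> 0 < \sum_i f i.
Proof.
move=> h h0; rewrite (bigD1 i0) //=.
have := @sumr_ge0 R _ (index_enum I) (fun i => i != i0) f (fun i _ => h i).
lra.
Qed.

Lemma keyK n (B : 'M[R]_n) (v : 'cV[R]_n) (u : 'rV[R]_n) (s : R) :
  mx_nonneg B -> (forall i, 0 < v i 0) -> (forall i, (B *m v) i 0 < s * v i 0) ->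
  mx_nonneg u -> u != 0 -> (forall j, s * u 0 j <= (u *m B) 0 j) -> False.
Proof.
move=> hB hv hBv hu /rV0Pn [i0 hi0] hsu.
have h1 : s * (u *m v) 0 0 <= (u *m B *m v) 0 0.
  rewrite !mxE mulr_sumr; apply: ler_sum => j _.
  by rewrite mulrA ler_wpM2r // ltW.
have h2 : (u *m (B *m v)) 0 0 < s * (u *m v) 0 0.
  rewrite !mxE mulr_sumr -subr_gt0 -sumrB.
  apply: (@sum_pos _ _ i0) => [i|].
  - rewrite mulrA [s * _]mulrC -mulrA -mulrBr; apply: mulr_ge0 => //.
    by rewrite subr_ge0 ltW.
  - rewrite mulrA [s * _]mulrC -mulrA -mulrBr; apply: mulr_gt0.
    + by rewrite lt0r hi0 hu.
    + by rewrite subr_gt0.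
rewrite mulmxA in h2; lra.
Qed.


Lemma Mlemma n (B : 'M[R]_n) (v : 'cV[R]_n) (s : R) :
  0 <= s -> mx_nonneg B -> (forall i, 0 < v i 0) -> (forall i, (B *m v) i 0 < s * v i 0) ->
  (s%:M - B) \in unitmx /\ mx_nonneg (invmx (s%:M - B)).
Proof.
move=> hs hB hv hBv.
have eqZ (a : 'rV[R]_n) j : (a *m (s%:M - B)) 0 j = s * a 0 j - (a *m B) 0 j.
  by rewrite mulmxBr mul_mx_scalar !mxE.
have hU : (s%:M - B) \in unitmx.
  rewrite -row_free_unit; apply: inj_row_free => a ha.
  case: (eqVneq a 0) => // ha0; exfalso.
  pose u := map_mx (fun x => `|x|) a.
  apply: (keyK (u := u) hB hv hBv).
  - by move=> i j; rewrite mxE normr_ge0.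
  - move/rV0Pn: ha0 => [j hj]; apply/rV0Pn; exists j; rewrite mxE normr_eq0 //.
  - move=> j; have := eqZ a j; rewrite ha mxE => e0.
    have e : s * a 0 j = (a *m B) 0 j by lra.
    rewrite mxE -(ger0_norm hs) -normrM e mxE.
    apply: le_trans (ler_norm_sum _ _ _) _.
    rewrite mxE; apply: ler_sum => k _.
    by rewrite normrM (ger0_norm (hB k j)) mxE.
split => // i j.
set N := invmx _.
pose a := row i N.
have haZ : a *m (s%:M - B) = row i 1%:M by rewrite -row_mul mulVmx.
pose u := \row_k (if a 0 k < 0 then - a 0 k else 0).
have hu : mx_nonneg u.
  move=> x k; rewrite mxE; case: ifP => h //; by rewrite oppr_ge0 ltW.
have hau k : - u 0 k <= a 0 k.
  rewrite mxE; case: ifP => h; first by rewrite opprK.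
  by rewrite oppr0 leNgt h.
case: (eqVneq u 0) => [hu0|hu0]; last first.
  exfalso; apply: (keyK hB hv hBv hu hu0) => k.
  have hrow : 0 <= (s * a 0 k - (a *m B) 0 k).
    by rewrite -(eqZ a k) haZ !mxE; case: (i == k).
  have hsum : - (u *m B) 0 k <= (a *m B) 0 k.
    rewrite !mxE -sumrN; apply: ler_sum => l _.
    by rewrite -mulNr ler_wpM2r.
  rewrite [u 0 k]mxE; case: ifP => h.
  - lra.
  - rewrite mulr0 mxE; apply: sumr_ge0 => l _; apply: mulr_ge0 => //.
have -> : N i j = a 0 j by rewrite mxE.
rewrite leNgt; apply/negP => h.
have : u 0 j = 0 by rewrite hu0 mxE.
rewrite mxE h => /eqP; rewrite oppr_eq0 => /eqP h'; move: h; rewrite h' ltxx.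
done.
Qed.


Lemma normc_ge0 (z : R[i]) : 0 <= Normc.normc z.
Proof. by case: z => a b; exact: sqrtr_ge0. Qed.

Lemma normc_real (x : R) : 0 <= x -> Normc.normc (x%:C)%C = x.
Proof. by move=> hx; rewrite /= expr0n /= addr0 sqrtr_sqr ger0_norm. Qed.

Lemma normc_sum (I : finType) (F : I -> R[i]) :
  Normc.normc (\sum_i F i) <= \sum_i Normc.normc (F i).
Proof.
elim/big_rec2: _ => [|i y1 y2 _ h]; first by rewrite Normc.normc0.
by apply: le_trans (le_normcD _ _) _; rewrite lerD2l.
Qed.


Lemma UB n (X Y : 'M[R]_n) (v : 'cV[R]_n) (s : R) :
  mx_nonneg X -> mx_nonneg Y -> (forall i, 0 < v i 0) -> 0 < s ->
  mx_nonneg (s^+2 *: v - (s *: (X *m v) + Y *m v)) ->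
  forall z, eigenvalue (map_mx (real_complex R) (block_mx X Y 1%:M 0)) z ->
  Normc.normc z <= s.
Proof.
move=> hX hY hv hs hineq z /eigenvalueP [w hw hw0].
move: hw hw0; rewrite -(hsubmxK w); move: (lsubmx w) (rsubmx w) => a b hw hw0.
rewrite map_block_mx map_mx1 map_mx0 mul_row_block scale_row_mx in hw.
case/eq_row_mx: hw; rewrite mulmx1 mulmx0 addr0 => e1 e2.
set Xc := map_mx _ X in e1 e2; set Yc := map_mx _ Y in e2.
have eb : b = z *: a - a *m Xc by rewrite -e1 addrC addKr.
have ha0 : a != 0.
  apply/eqP => ha; move/eqP: hw0; apply.
  by rewrite eb ha scaler0 mul0mx subr0 row_mx0.
have eq2 : z^+2 *: a = z *: (a *m Xc) + a *m Yc.
  by rewrite e2 eb scalerBr scalerA -expr2 addrC subrK.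
pose u := \row_j Normc.normc (a 0 j).
pose l := Normc.normc z.
have hl : 0 <= l by exact: normc_ge0.
have hu : mx_nonneg u by move=> i j; rewrite mxE normc_ge0.
have hj j : l^+2 * u 0 j <= l * (u *m X) 0 j + (u *m Y) 0 j.
  have := eq2; move/matrixP/(_ 0 j); rewrite !mxE => e.
  have := congr1 (@Normc.normc R) e; rewrite Normc.normcM.
  have -> : Normc.normc (z ^+ 2) = l ^+ 2 by rewrite expr2 Normc.normcM -expr2.
  move=> ->; apply: le_trans (le_normcD _ _) _.
  apply: lerD.
  - rewrite Normc.normcM; apply: ler_wpM2l => //.
    apply: le_trans (normc_sum _) _; apply: ler_sum => i _.
    by rewrite !mxE Normc.normcM normc_real.
  - apply: le_trans (normc_sum _) _; apply: ler_sum => i _.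
    by rewrite !mxE Normc.normcM normc_real.
have e : u *m (s^+2 *: v - (s *: (X *m v) + Y *m v)) =
    s^+2 *: (u *m v) - (s *: (u *m X *m v) + u *m Y *m v).
  by rewrite mulmxBr mulmxDr !scalemxAr !mulmxA.
have h2 := nn_mul hu hineq 0 0; rewrite e in h2.
have hvn : mx_nonneg v by move=> i j; rewrite [j]ord1; exact: ltW (hv i).
have hP := nn_mul (nn_mul hu hX) hvn 0 0.
have hQ := nn_mul (nn_mul hu hY) hvn 0 0.
have hU : 0 < (u *m v) 0 0.
  move/rV0Pn: ha0 => [j hj0]; rewrite mxE.
apply: (sum_pos (i0 := j)) => [i|].
    by apply: mulr_ge0; [apply: hu | apply: ltW].
  apply: mulr_gt0 => //; rewrite mxE lt0r normc_ge0 andbT.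
  by apply/eqP => /Normc.eq0_normc /eqP; apply/negP: hj0.
have h1 : l^+2 * (u *m v) 0 0 <= l * (u *m X *m v) 0 0 + (u *m Y *m v) 0 0.
  rewrite ![(_ *m v) 0 0]mxE mulr_sumr mulr_sumr -big_split; apply: ler_sum => j _.
  have := ler_wpM2r (ltW (hv j)) (hj j); rewrite mulrDl -!mulrA.
  done.
move: h1 h2 hP hQ hU.
move: (u *m v) (u *m X *m v) (u *m Y *m v) => MU MP MQ; rewrite !mxE.
move: (MU 0 0) (MP 0 0) (MQ 0 0) => U P Q h1 h2 hP hQ hU.
rewrite -/l leNgt; apply/negP => hls.
have h3 : s * (l * P + Q) <= l * (s * P + Q) by nra.
have h4 : l * (s * P + Q) <= l * (s^+2 * U) by rewrite ler_wpM2l //; lra.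
have h5 : s * (l^+2 * U) <= s * (l * P + Q) by rewrite ler_wpM2l //; lra.
have h6 : 0 < s * l * U by apply: mulr_gt0 => //; apply: mulr_gt0 => //; lra.
nra.
Qed.


Lemma sing_eig n (X Y : 'M[R]_n) (t : R) :
  ~ (((t ^+ 2)%:M - (t *: X + Y)) \in unitmx) ->
  eigenvalue (map_mx (real_complex R) (block_mx X Y 1%:M 0)) (t%:C)%C.
Proof.
set Z := (_ - _) => hZ.
have [a haZ ha0] : exists2 a : 'rV[R]_n, a *m Z = 0 & a != 0.
  apply: contrapT => hn; apply: hZ; rewrite -row_free_unit.
  apply: inj_row_free => a haZ; apply: contrapT => ha0.
  by apply: hn; exists a => //; apply/eqP.
pose b := t *: a - a *m X.
have hw : row_mx a b *m block_mx X Y 1%:M 0 = t *: row_mx a b.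
  rewrite mul_row_block mulmx1 mulmx0 addr0 scale_row_mx; congr row_mx.
    by rewrite /b addrC subrK.
  move: haZ; rewrite /Z mulmxBr mul_mx_scalar mulmxDr -scalemxAr /b scalerBr scalerA -expr2.
  by move/eqP; rewrite subr_eq0 => /eqP ->; rewrite addrC addKr.
apply/eigenvalueP; exists (map_mx (real_complex R) (row_mx a b)).
  by rewrite -map_mxM hw map_mxZ.
rewrite map_mx_eq0; apply: contra ha0 => /eqP h.
by rewrite -row_mx0 in h; have [-> _] := eq_row_mx h.
Qed.


Lemma pert_scalar (tau t W V c y d : R) :
  c = (2 * `|tau| + 1) * `|W| + `|V| -> d <= 1 -> d * c < y -> `|t - tau| < d ->
  0 < y + ((t ^+ 2 - tau ^+ 2) * W - (t - tau) * V).
Proof.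
move=> hc hd1 hdc htd.
set D := t - tau.
have e : (t ^+ 2 - tau ^+ 2) * W - (t - tau) * V = D * ((D + 2 * tau) * W - V).
  by rewrite /D; ring.
rewrite e.
have hD : `|D| <= 1 by apply: le_trans (ltW htd) hd1.
have h1 : `|(D + 2 * tau) * W - V| <= c.
  apply: le_trans (ler_normB _ _) _; rewrite hc lerD2r normrM ler_wpM2r //.
  apply: le_trans (ler_normD _ _) _; rewrite normrM (ger0_norm (ler0n _ 2)).
  lra.
have h2 : `|D * ((D + 2 * tau) * W - V)| < y.
  rewrite normrM; apply: le_lt_trans hdc.
  apply: le_trans (ler_wpM2l (normr_ge0 _) h1) _.
  apply: ler_wpM2r; last exact: ltW.
  by rewrite hc; apply: addr_ge0 => //; apply: mulr_ge0 => //; apply: addr_ge0 => //; apply: mulr_ge0.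
have := ler_norm (- (D * ((D + 2 * tau) * W - V))); rewrite normrN.
lra.
Qed.


Lemma unif_delta (I : finType) (c y : I -> R) :
  (forall i, 0 <= c i) -> (forall i, 0 < y i) ->
  exists2 d, 0 < d & (d <= 1 /\ forall i, d * c i < y i).
Proof.
move=> hc hy; set S := \sum_i c i / y i.
have hS i : c i / y i <= S.
  rewrite /S (bigD1 i) //= lerDl; apply: sumr_ge0 => k _.
  by apply: divr_ge0 => //; apply: ltW.
have hS0 : 0 <= S by apply: sumr_ge0 => k _; apply: divr_ge0 => //; apply: ltW.
exists (1 / (1 + S)); first by apply: divr_gt0 => //; lra.
split; first by rewrite ler_pdivrMr ?mul1r; lra.
move=> i; rewrite mul1r mulrC -/(c i / (1 + S)) ltr_pdivrMr; last lra.
have := hS i; rewrite ler_pdivrMr // => h.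
have := hy i; nra.
Qed.

Lemma pert n (X : 'M[R]_n) (y w : 'cV[R]_n) (tau : R) :
  (forall i, 0 < y i 0) -> exists2 d, 0 < d & forall t, `|t - tau| < d ->
  forall i, 0 < y i 0 + ((t ^+ 2 - tau ^+ 2) * w i 0 - (t - tau) * (X *m w) i 0).
Proof.
move=> hy.
have [d hd [hd1 hdc]] := @unif_delta _ (fun i => (2 * `|tau| + 1) * `|w i 0| + `|(X *m w) i 0|)
   (fun i => y i 0) (fun i => addr_ge0 (mulr_ge0 (addr_ge0 (mulr_ge0 (ler0n _ 2) (normr_ge0 _)) ler01) (normr_ge0 _)) (normr_ge0 _)) hy.
exists d => // t ht i.
exact: (pert_scalar erefl hd1 (hdc i) ht).
Qed.


Definition Zt n (X Y : 'M[R]_n) (t : R) : 'M[R]_n := (t ^+ 2)%:M - (t *: X + Y).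
Definition good n (X Y : 'M[R]_n) (t : R) :=
  Zt X Y t \in unitmx /\ mx_nonneg (invmx (Zt X Y t)).

Lemma Zt_shift n (X Y : 'M[R]_n) t tau (w : 'cV[R]_n) :
  Zt X Y t *m w = Zt X Y tau *m w + ((t ^+ 2 - tau ^+ 2) *: w - (t - tau) *: (X *m w)).
Proof.
rewrite /Zt !mulmxBl !mul_scalar_mx !mulmxDl -!scalemxAl.
apply/matrixP => i j; rewrite !mxE; ring.
Qed.

Lemma Zt_entry n (X Y : 'M[R]_n) t (w : 'cV[R]_n) i :
  (Zt X Y t *m w) i 0 = t ^+ 2 * w i 0 - ((t *: X + Y) *m w) i 0.
Proof. by rewrite /Zt mulmxBl mul_scalar_mx !mxE. Qed.

Lemma good_of_vec n (X Y : 'M[R]_n) t (v : 'cV[R]_n) :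
  mx_nonneg X -> mx_nonneg Y -> 0 <= t -> (forall i, 0 < v i 0) ->
  (forall i, 0 < (Zt X Y t *m v) i 0) -> good X Y t.
Proof.
move=> hX hY ht hv hZ; apply: Mlemma => //.
- by apply: sqr_ge0.
- by apply: nn_add => //; apply: nn_scale.
- by move=> i; have := hZ i; rewrite Zt_entry subr_gt0.
Qed.

Lemma open_good n (X Y : 'M[R]_n) tau :
  mx_nonneg X -> mx_nonneg Y -> 0 < tau -> good X Y tau ->
  exists2 d, 0 < d & forall t, 0 <= t -> `|t - tau| < d -> good X Y t.
Proof.
move=> hX hY htau [hU hN].
set e : 'cV[R]_n := const_mx 1.
set v := invmx (Zt X Y tau) *m e.
have hZv : Zt X Y tau *m v = e by rewrite /v mulKVmx.
have hB : mx_nonneg (tau *: X + Y) by apply: nn_add => //; apply: nn_scale => //; apply: ltW.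
have hv : forall i, 0 < v i 0.
  move=> i; have := Zt_entry X Y tau v i; rewrite hZv mxE => h.
  have hBv := nn_mul hB (nn_mul hN (@nn_const n 1)) i 0.
  have h2 : 0 < tau ^+ 2 by apply: exprn_gt0.
  have h3 : 0 < tau ^+ 2 * v i 0 by rewrite -/v in hBv; lra.
  by rewrite pmulr_rgt0 in h3.
have [d hd hpert] := pert X (y := e) v tau (fun i => ltac:(by rewrite mxE ltr01)).
exists d => // t ht htd; apply: (good_of_vec hX hY ht hv) => i.
by rewrite (Zt_shift _ _ _ tau) hZv !mxE; have := hpert t htd i; rewrite !mxE.
Qed.


Lemma eps_ge0 (a b : R) : (forall eps, 0 < eps -> 0 <= a + eps * b) -> 0 <= a.
Proof.
move=> h; rewrite leNgt; apply/negP => ha.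
have hb1 : 0 < `|b| + 1 by have := normr_ge0 b; lra.
have ha' : 0 < - a by rewrite oppr_gt0.
have := h (- a / (`|b| + 1)) (divr_gt0 ha' hb1).
have hb : - `|b| <= b by have := ler_norm (- b); rewrite normrN; lra.
have hb' : b <= `|b| by exact: ler_norm.
set eps := - a / (`|b| + 1).
have heps : eps * (`|b| + 1) = - a by rewrite /eps divfK //; lra.
have heps0 : 0 < eps by apply: divr_gt0 => //; lra.
have h1 : eps * b <= eps * `|b| by rewrite ler_wpM2l // ltW.
have h2 : eps * `|b| < eps * (`|b| + 1) by rewrite ltr_pM2l //; lra.
lra.
Qed.

Lemma closed_good n (X Y : 'M[R]_n) tau d :
  mx_nonneg X -> mx_nonneg Y -> 0 < tau -> Zt X Y tau \in unitmx -> 0 < d ->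
  (forall t, tau < t -> t < tau + d -> good X Y t) -> good X Y tau.
Proof.
move=> hX hY htau hU hd hgood; split => //.
set N := invmx (Zt X Y tau).
have claim : forall y : 'cV[R]_n, (forall i, 0 < y i 0) -> mx_nonneg (N *m y).
  move=> y hy; set w := N *m y.
  have hZw : Zt X Y tau *m w = y by rewrite /w mulKVmx.
  have [d' hd' hpert] := pert X w tau hy.
  set t := tau + Num.min d d' / 2.
  have hm : 0 < Num.min d d' by rewrite lt_min hd hd'.
  have hmd : Num.min d d' <= d by rewrite ge_min lexx.
  have hmd' : Num.min d d' <= d' by rewrite ge_min lexx orbT.
  have [hUt hNt] : good X Y t by apply: hgood; rewrite /t; lra.
  have -> : w = invmx (Zt X Y t) *m (Zt X Y t *m w) by rewrite mulKmx.
  apply: nn_mul => // i j; rewrite [j]ord1 (Zt_shift _ _ _ tau) hZw.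
  apply: ltW; have := hpert t _ i; rewrite !mxE; apply.
  rewrite /t addrAC subrr add0r ger0_norm; lra.
move=> i j.
apply: (@eps_ge0 _ ((N *m (const_mx 1 : 'cV[R]_n)) i 0)) => eps heps.
suff -> : N i j + eps * (N *m (const_mx 1 : 'cV[R]_n)) i 0 =
    (N *m (col j 1%:M + eps *: const_mx 1)) i 0.
  apply: claim => k; rewrite !mxE mulr1; have := heps; case: (k == j) => /=; lra.
rewrite mulmxDr -scalemxAr colE mulmxA mulmx1 -colE !mxE.
congr (_ + _ * _); apply: eq_bigr => k _; rewrite !mxE.
Qed.


Lemma homotopy n (X Y : 'M[R]_n) s :
  mx_nonneg X -> mx_nonneg Y -> 0 < s -> s <= 1 ->
  (forall t, s <= t -> t <= 1 -> Zt X Y t \in unitmx) -> good X Y 1 -> good X Y s.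
Proof.
move=> hX hY hs hs1 hU hg1.
apply: contrapT => hns.
pose Bad : set R := fun t => s <= t /\ t <= 1 /\ ~ good X Y t.
have hBs : Bad s by split; [exact: lexx | split].
have hasB : has_sup Bad.
  by split; [exists s | exists 1 => t [_ [h _]]].
have [d1 hd1 hop1] := open_good hX hY ltr01 hg1.
set b := sup Bad.
have hub : forall t, Bad t -> t <= b by move=> t ht; exact: sup_upper_bound.
have hsb : s <= b by exact: hub.
have hb1 : b <= 1 - d1.
  apply: ge_sup; first by exists s.
  move=> t [hst [ht1 hng]]; rewrite leNgt; apply/negP => ht.
  apply: hng; apply: hop1; first lra.
  rewrite ler0_norm; lra.
have hgb : good X Y b.
  apply: (@closed_good _ _ _ _ (1 - b)) => //; first lra.
  - by apply: hU; lra.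
  - lra.
  - move=> t hbt htb; apply: contrapT => hng.
    have : t <= b by apply: hub; split; [lra | split; [lra | done]].
    lra.
have [d2 hd2 hop2] := open_good hX hY (ltac:(lra) : 0 < b) hgb.
have [t ht htb] := sup_adherent hd2 hasB.
have htb' : t <= b by exact: hub.
case: ht => [hst [ht1 hng]]; apply: hng; apply: hop2; first lra.
rewrite ler0_norm; rewrite -/b in htb; lra.
Qed.


Lemma sr_le k (W : 'M[R]_k) s : 0 <= s ->
  (forall z, eigenvalue (map_mx (real_complex R) W) z -> Normc.normc z <= s) ->
  spectral_radius W <= s.
Proof.
move=> hs h; rewrite /spectral_radius.
set S := (X in sup X).
case: (pselect (exists x, S x)) => [ne|e].
  by apply: ge_sup => // x [z hz <-]; exact: h.
have -> : S = set0 by apply/seteqP; split => x // hx; apply: e; exists x.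
by rewrite sup0.
Qed.

Lemma sr_ge k (W : 'M[R]_k) s :
  (forall z, eigenvalue (map_mx (real_complex R) W) z -> Normc.normc z <= s) ->
  forall z, eigenvalue (map_mx (real_complex R) W) z -> Normc.normc z <= spectral_radius W.
Proof.
move=> h z hz; rewrite /spectral_radius; apply: sup_upper_bound; last by exists z.
split; first by exists (Normc.normc z), z.
by exists s => x [y hy <-]; exact: h.
Qed.

Lemma sr_ge0 k (W : 'M[R]_k) s :
  (forall z, eigenvalue (map_mx (real_complex R) W) z -> Normc.normc z <= s) ->
  0 <= spectral_radius W.
Proof.
move=> h; rewrite /spectral_radius.
set S := (X in sup X).
case: (pselect (exists x, S x)) => [[x [z hz _]]|e].
  apply: le_trans (normc_ge0 z) _; exact: (sr_ge h hz).
have -> : S = set0 by apply/seteqP; split => x // hx; apply: e; exists x.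
by rewrite sup0.
Qed.

End NN.


Section Split.
Variable R : realType.

Lemma null_mul m n (P A : 'M[R]_(m, n)) :
  (forall x, in_null P x -> in_null A x) ->
  forall p (M : 'M[R]_(n, p)), P *m M = 0 -> A *m M = 0.
Proof.
move=> h p M hPM; apply/matrixP => i j.
have hc : in_null P (col j M).
  by rewrite /in_null colE mulmxA hPM mul0mx.
have := h _ hc; rewrite /in_null colE mulmxA -colE => /colP /(_ i).
by rewrite !mxE.
Qed.

Lemma null_proj m n (P A : 'M[R]_(m, n)) (Q : 'M[R]_(n, m)) :
  (forall x, in_null P x -> in_null A x) -> P *m Q *m P = P ->
  A *m (Q *m P) = A.
Proof.
move=> h hP.
have : A *m (1%:M - Q *m P) = 0.
  by apply: (null_mul h); rewrite mulmxBr mulmx1 mulmxA hP subrr.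
by rewrite mulmxBr mulmx1 => /eqP; rewrite subr_eq0 => /eqP.
Qed.

Lemma range_proj m n (P A : 'M[R]_(m, n)) (Q : 'M[R]_(n, m)) :
  (forall y, in_range A y -> in_range P y) -> P *m Q *m P = P ->
  P *m Q *m A = A.
Proof.
move=> h hP; apply/matrixP => i j.
have [x hx] : in_range P (col j A).
  by apply: h; exists (delta_mx j 0); rewrite colE.
have : col j (P *m Q *m A) = col j A.
  by rewrite colE -mulmxA -colE hx !mulmxA hP.
by move/colP/(_ i); rewrite !mxE.
Qed.

Lemma mxE_sub m n (A B : 'M[R]_(m, n)) i j : (A - B) i j = A i j - B i j.
Proof. by rewrite !mxE. Qed.

Lemma mxE_opp m n (A : 'M[R]_(m, n)) i j : (- A) i j = - A i j.
Proof. by rewrite !mxE. Qed.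

End Split.

Unset Implicit Arguments.

Theorem theorem3p5 (R : realType) (m n : nat)
  (A P1 R1 S1 P2 R2 S2 : 'M[R]_(m, n)) :
  in_range A (const_mx 1) ->
  mx_nonneg (pinv A) ->
  weak_regular_pds A P1 R1 S1 ->
  regular_pds A P2 R2 S2 ->
  no_zero_row (pinv P2) ->
  mx_nonneg (P2 *m pinv P2) ->
  mx_ge (pinv P1) (pinv P2) ->
  (mx_ge (pinv P1 *m R1) (pinv P2 *m R2) \/ mx_ge (pinv P1 *m S1) (pinv P2 *m S2)) ->
  spectral_radius (iter_mx P1 R1 S1) <= spectral_radius (iter_mx P2 R2 S2) /\
  spectral_radius (iter_mx P2 R2 S2) < 1.
Proof.
move=> [x0 hx0] hAd [[eA1 hR1 hN1] hQ1 hX1 hY1] [[eA2 hR2 hN2] hQ2 hRR2 hSS2]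
  hnz hPQ hge hcase.
rewrite /iter_mx.
set Q1 := pinv P1 in hQ1 hX1 hY1 hge hcase *.
set Q2 := pinv P2 in hQ2 hnz hPQ hge hcase *.
set Ad := pinv A in hAd.
set X1 := Q1 *m R1 in hX1 hcase *.
set Y1 := - (Q1 *m S1) in hY1 *.
set X2 := Q2 *m R2 in hcase *.
set Y2 := - (Q2 *m S2).
have [p1a p1b p1c p1d] := pinvP P1.
have [p2a p2b p2c p2d] := pinvP P2.
have [pAa pAb pAc pAd] := pinvP A.
rewrite -/Q1 in p1a p1b p1c p1d; rewrite -/Q2 in p2a p2b p2c p2d.
rewrite -/Ad in pAa pAb pAc pAd.
have hX2 : mx_nonneg X2 by apply: nn_mul.
have hY2 : mx_nonneg Y2 by rewrite /Y2 -mulmxN; apply: nn_mul.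
have hXY1 : X1 + Y1 = Q1 *m P1 - Q1 *m A.
  rewrite eA1 /X1 /Y1 mulmxDr mulmxBr.
  apply/matrixP => i j; rewrite !mxE; ring.
have hXY2 : X2 + Y2 = Q2 *m P2 - Q2 *m A.
  rewrite eA2 /X2 /Y2 mulmxDr mulmxBr.
  apply/matrixP => i j; rewrite !mxE; ring.
have F1 : A *m (Q2 *m P2) = A.
  by apply: null_proj => // x hx; apply/hN2.
have F2 : P2 *m (Q1 *m P1) = P2.
  by apply: null_proj => // x hx; apply/hN2/hN1.
have F3 : P2 *m Q2 *m A = A.
  by apply: range_proj => // y hy; apply/hR2.
have E2Ad : Q2 *m P2 *m Ad = Ad.
  have hAd' : Ad = A^T *m (Ad^T *m Ad) by rewrite mulmxA -trmx_mul pAd pAb.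
  have hE : Q2 *m P2 *m A^T = A^T by rewrite -{1}p2d -trmx_mul F1.
  by rewrite hAd' mulmxA hE.
have E1Q2 : Q1 *m P1 *m Q2 = Q2.
  have hQ2' : Q2 = P2^T *m (Q2^T *m Q2) by rewrite mulmxA -trmx_mul p2d p2b.
  have hE : Q1 *m P1 *m P2^T = P2^T by rewrite -{1}p1d -trmx_mul F2.
  by rewrite hQ2' mulmxA hE.
set e : 'cV[R]_m := const_mx 1 in hx0.
set z := Ad *m e.
have hz0 : mx_nonneg z by apply: nn_mul => //; exact: nn_const.
have hAz : A *m z = e by rewrite /z hx0 !mulmxA pAa.
have hEz : Q2 *m P2 *m z = z by rewrite /z mulmxA E2Ad.
set c := Q2 *m e.
have hc : forall i, 0 < c i 0.
  move=> i; have [j hj] := hnz i; rewrite mxE.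
  apply: (sum_pos (i0 := j)) => [k|]; rewrite mxE mulr1 //.
  by rewrite lt0r hj hQ2.
have hXYz : (X2 + Y2) *m z = z - c.
  by rewrite hXY2 mulmxBl hEz -mulmxA hAz.
have hXz := nn_mul hX2 hz0; have hYz := nn_mul hY2 hz0.
have hzc : forall i, c i 0 <= z i 0.
  move=> i; have := nn_add hXz hYz i 0.
  by rewrite -mulmxDl hXYz !mxE subr_ge0.
have hz : forall i, 0 < z i 0 by move=> i; apply: lt_le_trans (hc i) (hzc i).
have [d hd [hd1 hdz]] := @unif_delta R _ (fun i => z i 0) (fun i => c i 0) (fun i => hz0 i 0) hc.
set mu := 1 - d / 2.
have hmu0 : 0 < mu by rewrite /mu; lra.
have hmu1 : mu < 1 by rewrite /mu; lra.
have hmu2 : 1 - d <= mu ^+ 2 by rewrite /mu; nra.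
have hb2 : forall w, eigenvalue (map_mx (real_complex R) (block_mx X2 Y2 1%:M 0)) w ->
    Normc.normc w <= mu.
  apply: (UB (v := z)) => // i j; rewrite [j]ord1.
  have hs : (X2 *m z) i 0 + (Y2 *m z) i 0 = z i 0 - c i 0.
    by have := hXYz; rewrite mulmxDl => /matrixP/(_ i 0); rewrite !mxE.
  have -> : (mu ^+ 2 *: z - (mu *: (X2 *m z) + Y2 *m z)) i 0 =
      mu ^+ 2 * z i 0 - (mu * (X2 *m z) i 0 + (Y2 *m z) i 0) by rewrite !mxE.
  have h1 := hXz i 0; have h2 := hYz i 0; have h3 := hzc i; have h4 := hdz i.
  have h5 := hz0 i 0.
  have h6 : mu * (X2 *m z) i 0 <= (X2 *m z) i 0 by rewrite ler_piMl // ltW.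
  have h7 : (1 - d) * z i 0 <= mu ^+ 2 * z i 0 by rewrite ler_wpM2r.
  lra.
set r := spectral_radius (block_mx X2 Y2 1%:M 0).
have hr1 : r < 1 by apply: le_lt_trans hmu1; apply: sr_le => //; exact: ltW.
have hr0 : 0 <= r by exact: (sr_ge0 hb2).
have hrb : forall w, eigenvalue (map_mx (real_complex R) (block_mx X2 Y2 1%:M 0)) w ->
    Normc.normc w <= r by exact: sr_ge hb2.
split; last exact: hr1.
suff hs : forall s, r < s -> s < 1 -> spectral_radius (block_mx X1 Y1 1%:M 0) <= s.
  set r1 := spectral_radius _ in hs *.
  rewrite leNgt; apply/negP => hr1r.
  have := hs ((r + Num.min r1 1) / 2).
  have hm1 : Num.min r1 1 <= r1 by rewrite ge_min lexx.
  have hm2 : Num.min r1 1 <= 1 by rewrite ge_min lexx orbT.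
  have hm3 : r < Num.min r1 1 by rewrite lt_min hr1r hr1.
  move=> /(_ ltac:(lra) ltac:(lra)); lra.
move=> s hrs hs1.
have hs0 : 0 < s by lra.
have hU : forall t, s <= t -> t <= 1 -> Zt X2 Y2 t \in unitmx.
  move=> t hst ht1; apply: contrapT => hn.
  have := hrb _ (sing_eig hn); rewrite normc_real; lra.
have hg1 : good X2 Y2 1.
  apply: (good_of_vec (v := z)) => // i.
  rewrite Zt_entry expr1n mul1r scale1r hXYz [(z - c) i 0]mxE.
  by rewrite [(- c) i 0]mxE; have := hc i; lra.
have [hUs hNs] := homotopy hX2 hY2 hs0 (ltW hs1) hU hg1.
set v := invmx (Zt X2 Y2 s) *m c.
have hZv : Zt X2 Y2 s *m v = c by rewrite /v mulKVmx.
have hv0 : mx_nonneg v by apply: nn_mul => //; apply: nn_mul => //; exact: nn_const.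
clearbody v.
have hc0 : mx_nonneg c by apply: nn_mul => //; exact: nn_const.
have hkey : s^+2 *: v = c + (s *: (X2 *m v) + Y2 *m v).
  move: hZv; rewrite /Zt mulmxBl mul_scalar_mx mulmxDl -scalemxAl => h.
  by rewrite -h subrK.
have hXv := nn_mul hX2 hv0; have hYv := nn_mul hY2 hv0.
have hv : forall i, 0 < v i 0.
  move=> i; have h : s ^+ 2 * v i 0 = c i 0 + (s * (X2 *m v) i 0 + (Y2 *m v) i 0).
    by have := hkey; move/matrixP/(_ i 0); rewrite !mxE.
  have := hc i; have := hXv i 0; have := hYv i 0 => h1 h2 h3.
  have h4 : 0 <= s * (X2 *m v) i 0 by apply: mulr_ge0 => //; apply: ltW.
  have h5 : 0 < s ^+ 2 * v i 0 by lra.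
  by rewrite pmulr_rgt0 // in h5; apply: exprn_gt0.
have hs2 : s ^+ 2 != 0 by rewrite expf_eq0 /= gt_eqF.
set w := s^-2 *: (e + s *: (R2 *m v) - S2 *m v).
have hvQ : v = Q2 *m w.
  have h : c + s *: (X2 *m v) - Q2 *m S2 *m v = s^+2 *: v.
    by rewrite hkey /Y2 mulNmx addrA.
  rewrite /w -scalemxAr mulmxBr mulmxDr -scalemxAr (mulmxA Q2 R2 v) (mulmxA Q2 S2 v) -/c -/X2 h.
  by rewrite scalerA mulVf // scale1r.
have hE2v : Q2 *m P2 *m v = v by rewrite {1}hvQ mulmxA p2b.
have hE1v : Q1 *m P1 *m v = v by rewrite {1}hvQ mulmxA E1Q2.
have hXY1v : X1 *m v + Y1 *m v = v - Q1 *m (A *m v).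
  by rewrite -mulmxDl hXY1 mulmxBl hE1v mulmxA.
have hXY2v : X2 *m v + Y2 *m v = v - Q2 *m (A *m v).
  by rewrite -mulmxDl hXY2 mulmxBl hE2v mulmxA.
have hFe : P2 *m Q2 *m e = e by rewrite hx0 mulmxA F3.
have eq1 : s^+2 *: (P2 *m v) = e + s *: (P2 *m Q2 *m (R2 *m v)) - P2 *m Q2 *m (S2 *m v).
  rewrite scalemxAr hkey mulmxDr mulmxDr -scalemxAr /c /X2 /Y2 mulNmx mulmxN !mulmxA hFe.
  by rewrite addrA.
have eq2 : A *m v = P2 *m v - P2 *m Q2 *m (R2 *m v) + P2 *m Q2 *m (S2 *m v).
  have -> : A *m v = P2 *m Q2 *m ((P2 - R2 + S2) *m v) by rewrite -eA2 mulmxA F3.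
  by rewrite mulmxDl mulmxBl !mulmxDr mulmxN (mulmxA (P2 *m Q2) P2 v) p2a.
have hfr : mx_nonneg (P2 *m Q2 *m (R2 *m v)) by apply: nn_mul => //; apply: nn_mul.
have hfs : mx_nonneg (P2 *m Q2 *m (- S2 *m v)) by apply: nn_mul => //; apply: nn_mul.
have hAv : mx_nonneg (A *m v).
  move=> i j; rewrite [j]ord1.
  have h1 : s ^+ 2 * (P2 *m v) i 0 = 1 + s * (P2 *m Q2 *m (R2 *m v)) i 0
      - (P2 *m Q2 *m (S2 *m v)) i 0.
    by have := eq1; move/matrixP/(_ i 0); rewrite !mxE.
  have h2 : (A *m v) i 0 = (P2 *m v) i 0 - (P2 *m Q2 *m (R2 *m v)) i 0
      + (P2 *m Q2 *m (S2 *m v)) i 0.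
    by have := eq2; move/matrixP/(_ i 0); rewrite !mxE.
  have h3 : 0 <= - (P2 *m Q2 *m (S2 *m v)) i 0.
    by have := hfs i 0; rewrite mulNmx mulmxN mxE.
  have h4 := hfr i 0.
  have h5 : 0 <= s * (1 - s) * (P2 *m Q2 *m (R2 *m v)) i 0.
    by apply: mulr_ge0 => //; apply: mulr_ge0; lra.
  have h6 : 0 <= (1 - s ^+ 2) * (- (P2 *m Q2 *m (S2 *m v)) i 0).
    by apply: mulr_ge0 => //; rewrite subr_ge0 expr_le1 //; lra.
  have h7 : s ^+ 2 * (A *m v) i 0 = 1 + s * (1 - s) * (P2 *m Q2 *m (R2 *m v)) i 0
      + (1 - s ^+ 2) * (- (P2 *m Q2 *m (S2 *m v)) i 0).
    rewrite h2; rewrite mulrDr mulrBr h1; ring.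
  have h8 : 0 < s ^+ 2 * (A *m v) i 0 by lra.
  by rewrite pmulr_rgt0 ?exprn_gt0 // in h8; apply: ltW.
have hQd := nn_mul hge hAv.
have hineq : mx_nonneg (s^+2 *: v - (s *: (X1 *m v) + Y1 *m v)).
  move=> i j; rewrite [j]ord1.
  have -> : (s ^+ 2 *: v - (s *: (X1 *m v) + Y1 *m v)) i 0 =
      s ^+ 2 * v i 0 - (s * (X1 *m v) i 0 + (Y1 *m v) i 0) by rewrite !mxE.
  have k1 : s ^+ 2 * v i 0 = c i 0 + (s * (X2 *m v) i 0 + (Y2 *m v) i 0).
    by have := hkey; move/matrixP/(_ i 0); rewrite !mxE.
  have k2 : (X1 *m v) i 0 + (Y1 *m v) i 0 = v i 0 - (Q1 *m (A *m v)) i 0.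
    by have := hXY1v; move/matrixP/(_ i 0); rewrite !mxE.
  have k3 : (X2 *m v) i 0 + (Y2 *m v) i 0 = v i 0 - (Q2 *m (A *m v)) i 0.
    by have := hXY2v; move/matrixP/(_ i 0); rewrite !mxE.
  have k4 : 0 <= (Q1 *m (A *m v)) i 0 - (Q2 *m (A *m v)) i 0.
    by have := hQd i 0; rewrite mulmxBl mxE_sub.
  have k5 := hc i.
  case: hcase => hC.
  - have k6 : 0 <= (X1 *m v) i 0 - (X2 *m v) i 0.
      by have := nn_mul hC hv0 i 0; rewrite mulmxBl mxE_sub.
    have k7 : 0 <= (1 - s) * ((X1 *m v) i 0 - (X2 *m v) i 0).
      by apply: mulr_ge0 => //; lra.
    lra.
  - have k6 : 0 <= (Y2 *m v) i 0 - (Y1 *m v) i 0.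
      have e1 : (Y1 *m v) i 0 = - (Q1 *m S1 *m v) i 0 by rewrite /Y1 mulNmx mxE_opp.
      have e2 : (Y2 *m v) i 0 = - (Q2 *m S2 *m v) i 0 by rewrite /Y2 mulNmx mxE_opp.
      have := nn_mul hC hv0 i 0; rewrite mulmxBl mxE_sub.
      lra.
    have k7 : 0 <= (1 - s) * ((Y2 *m v) i 0 - (Y1 *m v) i 0).
      by apply: mulr_ge0 => //; lra.
    have k8 : 0 <= s * ((Q1 *m (A *m v)) i 0 - (Q2 *m (A *m v)) i 0).
      by apply: mulr_ge0 => //; lra.
    have k2' := congr1 (fun x => s * x) k2; have k3' := congr1 (fun x => s * x) k3.
    simpl in k2', k3'.
    lra.
apply: sr_le; first exact: ltW.
exact: (UB (v := v)).
Qed.
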